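(* Let $G$ be a $(k+1)$-critical hypergraph with $k\ge2$, and let $F\subseteq E(G)$ be a separating edge set of $G$ with $|F|\le k$. Then $|F|=k$ and there is an edge cut $(X,Y,F)$ of $G$ with the following properties: (a) every $k$-coloring $\varphi$ of $G[X]$ satisfies $|\varphi(X_F)|=1$, and every $k$-coloring $\varphi$ of $G[Y]$ satisfies $|\varphi(Y_F)|=k$ and, for every color $i\in\{1,\dots,k\}$, there is an edge $e\in F$ with $\varphi(e\cap Y)=\{i\}$; (b) each vertex of $Y_F$ is incident to exactly one edge of $F$; (c) if $|X_F|\ge2$, then the hypergraph obtained from $G[X]$ by adding the edge $X_F$ is $(k+1)$-critical; (d) the hypergraph obtained from $G[Y]$ by adding a new vertex $v$ and, for each edge $e\in F$, the new edge $(e\setminus X)\cup\{v\}$, is $(k+1)$-critical.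
   Context: A hypergraph is a pair $G=(V,E)$ of finite sets with $E\subseteq 2^V$ and $|e|\ge2$ for all $e\in E$. A $k$-coloring is a map $V\to\{1,\dots,k\}$ such that every edge contains two vertices of different colors; $\chi$ is the chromatic number. $G$ is $(k+1)$-critical if $\chi(G)=k+1$ but $\chi(H)\le k$ for every proper subhypergraph $H$. $G[X]$ has vertex set $X$ and the edges of $G$ contained in $X$. For $X\subseteq V(G)$, $\partial_G(X)$ is the set of edges meeting both $X$ and $V(G)\setminus X$. A separating edge set is a set $F\subseteq E(G)$ such that $G-F$ has more (connected) components than $G$. An edge cut of $G$ is a triple $(X,Y,F)$ with $X$ a non-empty proper subset of $V(G)$, $Y=V(G)\setminus X$, and $F=\partial_G(X)$; then $X_F$ (resp. $Y_F$) denotes the set of vertices of $X$ (resp. $Y$) incident to some edge of $F$. *)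

(* Defs.v *)
From mathcomp Require Import all_boot.
Set Implicit Arguments. Unset Strict Implicit. Unset Printing Implicit Defensive.

Record hgraph (T : finType) := HG { hV : {set T}; hE : {set {set T}} }.

Section Hyper.
Variable T : finType.
Implicit Types (G H : hgraph T) (A X : {set T}) (F : {set {set T}}).

Definition is_hypergraph G :=
  forall e, e \in hE G -> e \subset hV G /\ 2 <= #|e|.

Definition subhypergraph H G :=
  [/\ is_hypergraph H, hV H \subset hV G & hE H \subset hE G].
Definition proper_subhypergraph H G := subhypergraph H G /\ H <> G.

(* colorings: colors are 0,...,n-1 (a relabelling of 1,...,n) *)
Definition proper_col G (f : T -> nat) :=
  forall e, e \in hE G -> exists x, exists y, [/\ x \in e, y \in e & f x <> f y].
Definition is_coloring G n (f : T -> nat) :=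
  (forall x, x \in hV G -> f x < n) /\ proper_col G f.
Definition colorable G n := exists f, is_coloring G n f.

Definition chi_is G n := colorable G n /\ forall m, m < n -> ~ colorable G m.

Definition critical G n :=
  chi_is G n /\ forall H, proper_subhypergraph H G -> exists2 m, m <= n.-1 & chi_is H m.

Definition induced G X := HG X [set e in hE G | e \subset X].

Definition del_edges G F := HG (hV G) (hE G :\: F).

Definition adj G : rel T := fun x y => [exists e in hE G, (x \in e) && (y \in e)].
Definition components G : {set {set T}} :=
  [set [set y in hV G | connect (adj G) x y] | x in hV G].

Definition separating G F :=
  F \subset hE G /\ #|components G| < #|components (del_edges G F)|.

Definition boundary G X : {set {set T}} :=
  [set e in hE G | (e :&: X != set0) && (e :&: (hV G :\: X) != set0)].

Definition incident_part A F : {set T} := [set x in A | [exists e in F, x \in e]].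

Definition img (f : T -> nat) A : seq nat := undup [seq f x | x <- enum A].

Definition add_edge G A := HG (hV G) (A |: hE G).

(* with Y = V \ X: G[Y] plus a new vertex None and edges (e \ X) ∪ {None}, e in F *)
Definition glue_new_vertex G X F : hgraph (option T) :=
  let Y := hV G :\: X in
  HG (None |: [set Some y | y : T in Y])
     ([set [set Some y | y : T in e :\: X] :|: [set None] | e : {set T} in F]
        :|: [set [set Some y | y : T in e] | e : {set T} in hE (induced G Y)]).

End Hyper.

(* Main.v *)
Require Import Defs.
From mathcomp Require Import all_boot.
From Stdlib Require Import Classical Lia.
Set Implicit Arguments. Unset Strict Implicit. Unset Printing Implicit Defensive.

Section Gen0.
Variable T : finType.
Implicit Types (G H : hgraph T) (A X : {set T}) (F : {set {set T}}).

Lemma colorable_mono G m n : m <= n -> colorable G m -> colorable G n.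
Proof.
move=> mn [f [h1 h2]]; exists f; split=> // x /h1 hx; exact: leq_trans hx mn.
Qed.

Lemma chi_exists G n : colorable G n -> exists2 m, m <= n & chi_is G m.
Proof.
elim: n => [|n IH] hc.
  by exists 0 => //; split=> // m.
case: (classic (colorable G n)) => hn.
  by case: (IH hn) => m hm hchi; exists m => //; exact: leqW.
exists n.+1 => //; split=> // m hm hcm; apply: hn.
exact: colorable_mono hcm.
Qed.

Lemma critical_not_col G k : critical G k.+1 -> ~ colorable G k.
Proof. by case=> [[_ h] _]; apply: h. Qed.

Lemma critical_sub_col G k H : critical G k.+1 -> proper_subhypergraph H G -> colorable H k.
Proof.
case=> _ h /h [m hm [hc _]]; exact: colorable_mono hm hc.
Qed.

Lemma critical_of G k : ~ colorable G k -> colorable G k.+1 ->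
  (forall H, proper_subhypergraph H G -> colorable H k) -> critical G k.+1.
Proof.
move=> nc c hs; split.
  split=> // m hm hcm; apply: nc; exact: colorable_mono hcm.
move=> H /hs /chi_exists [m hm hchi]; by exists m.
Qed.

Lemma col_sub_gen (A B : hgraph T) n f : is_coloring A n f -> hV B \subset hV A ->
  hE B \subset hE A -> is_coloring B n f.
Proof.
case=> h1 h2 sV sE; split=> [x /(subsetP sV) /h1 //|e /(subsetP sE) /h2 //].
Qed.

End Gen0.

Section Gen.
Variable T : finType.
Implicit Types (G H : hgraph T) (A X : {set T}) (F : {set {set T}}).

Lemma induced_hyp G X : is_hypergraph G -> is_hypergraph (induced G X).
Proof.
move=> h e; rewrite inE => /andP [/h [_ h2] h3]; by split.
Qed.

Lemma induced_proper G X : is_hypergraph G -> X \proper hV G ->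
  proper_subhypergraph (induced G X) G.
Proof.
move=> h; rewrite properEneq => /andP [ne sub]; split.
  split=> //; first exact: induced_hyp.
  by apply/subsetP=> e; rewrite inE => /andP [].
by move=> eX; move: ne; rewrite -eX eqxx.
Qed.




Section Core.
Variables (G : hgraph T) (k : nat) (X : {set T}) (phi psi : T -> nat).
Let V := hV G.
Let Y := V :\: X.
Let F := boundary G X.
Hypothesis hyp : is_hypergraph G.
Hypothesis nG : ~ colorable G k.
Hypothesis k0 : 0 < k.
Hypothesis hF : #|F| <= k.
Hypothesis cphi : is_coloring (induced G X) k phi.
Hypothesis cpsi : is_coloring (induced G Y) k psi.

Definition valid (p : nat -> nat) :=
  (forall u, u < k -> p u < k) /\ (forall u v, u < k -> v < k -> p u = p v -> u = v).

Definition comb (p : nat -> nat) x := if x \in X then phi x else p (psi x).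
Definition mono p (e : {set T}) := forall x y, x \in e -> y \in e -> comb p x = comb p y.

Lemma psi_lt y : y \in Y -> psi y < k.
Proof. by case: cpsi => h _; apply: h. Qed.
Lemma phi_lt x : x \in X -> phi x < k.
Proof. by case: cphi => h _; apply: h. Qed.

Lemma inF e : e \in F -> [/\ e \in hE G, exists2 x, x \in e & x \in X & exists2 y, y \in e & y \in Y].
Proof.
rewrite inE => /andP [eE /andP [/set0Pn [x] hx /set0Pn [y] hy]].
move: hx hy; rewrite !inE => /andP [h1 h2] /andP [h3 h4].
split=> //; [by exists x| by exists y; rewrite // /Y inE].
Qed.

Lemma sub_V e : e \in hE G -> e \subset V.
Proof. by move/hyp => []. Qed.

Lemma notX_Y e y : e \in hE G -> y \in e -> y \notin X -> y \in Y.
Proof. by move=> /sub_V /subsetP h /h yV yX; rewrite /Y inE yX. Qed.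

Lemma hit p : valid p -> exists2 e, e \in F & mono p e.
Proof.
move=> [pl pi]; apply: NNPP => hn; apply: nG; exists (comb p); split.
  move=> x xV; rewrite /comb; case: ifP => xX; first exact: phi_lt.
  by apply: pl; apply: psi_lt; rewrite /Y inE xX.
move=> e eE.
case: (boolP (e \in F)) => eF.
  apply: NNPP => hh; apply: hn; exists e => // x y xe ye.
  apply: NNPP => hxy; apply: hh; by exists x, y.
case: (boolP (e \subset X)) => eX.
  case: cphi => _ /(_ e); rewrite inE eE eX => /(_ isT) [x [y [xe ye hxy]]].
  exists x, y; split=> //; rewrite /comb.
  by rewrite (subsetP eX _ xe) (subsetP eX _ ye).
have eY : e \subset Y.
  apply/subsetP => y ye; case: (boolP (y \in X)) => yX; last exact: (notX_Y eE ye yX).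
  case/subsetPn: eX => z ze zX.
  have zY : z \in Y by exact: (notX_Y eE ze zX).
  move: zY; rewrite /Y => zY.
  move: eF; rewrite inE eE /= negb_and !negbK => /orP [] /eqP/setP.
    by move/(_ y); rewrite !inE ye yX.
  by move/(_ z); rewrite !inE ze; move: zY; rewrite inE => ->.
case: cpsi => _ /(_ e); rewrite inE eE eY => /(_ isT) [x [y [xe ye hxy]]].
exists x, y; split=> //; rewrite /comb.
have xY := subsetP eY _ xe; have yY := subsetP eY _ ye.
move: (xY) (yY); rewrite /Y !inE => /andP [/negbTE -> _] /andP [/negbTE -> _].
move=> /pi; move=> h; apply: hxy; apply: h; exact: psi_lt.
Qed.

Definition shift (p : nat -> nat) t u := (p u + t) %% k.

Lemma modadd_inj a b t : a < k -> b < k -> (a + t) %% k = (b + t) %% k -> a = b.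
Proof.
move=> ha hb /eqP; rewrite eqn_modDr => /eqP; by rewrite !modn_small.
Qed.

Lemma valid_shift p t : valid p -> valid (shift p t).
Proof.
case=> pl pi; split=> [u hu|u v hu hv]; first by rewrite /shift ltn_pmod.
by rewrite /shift => /modadd_inj h; apply: pi => //; apply: h; apply: pl.
Qed.

Lemma valid_id : valid id.
Proof. by split. Qed.

Lemma mono2 r r' e : e \in F -> mono r e -> mono r' e ->
  exists2 y, y \in Y & r (psi y) = r' (psi y).
Proof.
case/inF => eE [x xe xX] [y ye yY] h1 h2; exists y => //.
have := h1 x y xe ye; have := h2 x y xe ye; rewrite /comb xX.
move: yY; rewrite /Y inE => /andP [/negbTE -> _] <- ->.
done.
Qed.

Lemma shift_eq a s t : a < k -> s < k -> t < k -> (a + s) %% k = (a + t) %% k -> s = t.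
Proof.
move=> ha hs ht /eqP; rewrite eqn_modDl => /eqP; by rewrite !modn_small.
Qed.

Lemma count p : valid p ->
  [/\ #|F| = k, (forall e, e \in F -> exists2 t, t < k & mono (shift p t) e) &
     (forall e e', e \in F -> e' \in F -> mono p e -> mono p e' -> e = e')].
Proof.
move=> vp; have [pl _] := vp.
have : forall t : 'I_k, exists e, e \in F /\ mono (shift p t) e.
  by move=> t; case: (hit (valid_shift t vp)) => e ? ?; exists e.
case/fin_all_exists => f hf.
have finj : injective f.
  move=> s t fst; apply: val_inj => /=.
  case: (hf s) => sF sm; case: (hf t) => _; rewrite -fst => tm.
  case: (mono2 sF sm tm) => y yY; rewrite /shift.
  by apply: shift_eq; [apply: pl; apply: psi_lt| |].
have sI : [set f t | t in 'I_k] \subset F.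
  by apply/subsetP => e /imsetP [t _ ->]; case: (hf t).
have cI : #|[set f t | t in 'I_k]| = k by rewrite card_imset // card_ord.
have IF : [set f t | t in 'I_k] = F.
  by apply/eqP; rewrite eqEcard sI cI.
have inI : forall e, e \in F -> exists t, e = f t.
  by move=> e; rewrite -IF => /imsetP [t _ ->]; exists t.
have zero : forall e, e \in F -> mono p e -> exists2 t, e = f t & val t = 0.
  move=> e eF me; case: (inI e eF) => t et; exists t => //.
  case: (hf t) => _; rewrite -et => mt.
  case: (mono2 eF me mt) => y yY; rewrite /shift.
  have hp : p (psi y) < k by apply: pl; apply: psi_lt.
  rewrite -{1}(modn_small hp) -{1}(addn0 (p (psi y))).
  by move/(shift_eq hp k0 (ltn_ord t)).
split.
- by rewrite -IF cI.
- move=> e /inI [t ->]; exists t => //; by case: (hf t).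
- move=> e e' eF e'F me me'.
  case: (zero e eF me) => t -> t0; case: (zero e' e'F me') => t' -> t'0.
  by congr f; apply: val_inj; rewrite /= t0 t'0.
Qed.

Definition swapn (a b u : nat) : nat := if u == a then b else if u == b then a else u.

Lemma valid_comp p q : valid p -> valid q -> valid (p \o q).
Proof.
case=> pl pi [ql qi]; split=> [u hu|u v hu hv]; first by apply: pl; apply: ql.
by move=> /= /pi h; apply: qi => //; apply: h; apply: ql.
Qed.

Lemma valid_swap a b : a < k -> b < k -> valid (swapn a b).
Proof.
move=> ha hb; split=> [u hu|u v hu hv]; rewrite /swapn.
  by case: ifP => _ //; case: ifP.
by repeat case: eqP; move=> *; lia.
Qed.

Lemma perm_ex a1 a2 b1 b2 : a1 < k -> a2 < k -> b1 < k -> b2 < k ->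
  (b1 == b2) = (a1 == a2) ->
  exists p, [/\ valid p, p b1 = a1 & p b2 = a2].
Proof.
move=> ha1 ha2 hb1 hb2 he.
pose s := shift id (k - b1 + a1).
have vs : valid s by apply: valid_shift; exact: valid_id.
have s1 : s b1 = a1.
  by rewrite /s /shift /= addnA subnKC ?(ltnW hb1) // modnDl modn_small.
have vw : valid (swapn a2 (s b2)) by apply: valid_swap => //; case: vs => h _; apply: h.
exists (swapn a2 (s b2) \o s); split.
- exact: valid_comp.
- rewrite /= s1 /swapn; case: (eqVneq a1 a2) => [e12|a12].
    move: he; rewrite e12 eqxx => /eqP <-; by rewrite s1 e12.
  case: (eqVneq a1 (s b2)) => // a1s.
  have : b1 = b2 by case: vs => _ h; apply: h => //; rewrite s1.
  by move/eqP; rewrite he (negbTE a12).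
- rewrite /= /swapn eqxx; by case: ifP => [/eqP|].
Qed.

Definition const_on (f : T -> nat) (A : {set T}) :=
  forall x y, x \in A -> y \in A -> f x = f y.

Lemma core :
  [/\ #|F| = k,
      (forall e, e \in F -> const_on phi (e :&: X) /\ const_on psi (e :&: Y)) &
      (forall e1 e2 x1 x2 y1 y2, e1 \in F -> e2 \in F -> e1 != e2 ->
         x1 \in e1 :&: X -> x2 \in e2 :&: X -> y1 \in e1 :&: Y -> y2 \in e2 :&: Y ->
         (phi x1 == phi x2) != (psi y1 == psi y2))].
Proof.
have [cF cov uni] := count valid_id.
have cst : forall e, e \in F -> const_on phi (e :&: X) /\ const_on psi (e :&: Y).
  move=> e /cov [t ht mt]; split=> x y; rewrite !inE.
    move=> /andP [xe xX] /andP [ye yX]; have := mt x y xe ye.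
    by rewrite /comb xX yX.
  move=> /andP [xe xY] /andP [ye yY]; have := mt x y xe ye.
  have yl : psi y < k by apply: psi_lt; move: yY; rewrite /Y ?inE.
  have xl : psi x < k by apply: psi_lt; move: xY; rewrite /Y ?inE.
  move: xY yY; rewrite /Y ?inE => /andP [/negbTE xX _] /andP [/negbTE yX _].
  rewrite /comb xX yX /shift /=; exact: modadd_inj.
split=> // e1 e2 x1 x2 y1 y2 e1F e2F ne hx1 hx2 hy1 hy2.
apply/negP => /eqP he.
have iX : forall x e, x \in e :&: X -> phi x < k.
  by move=> x e; rewrite in_setI => /andP [_ /phi_lt].
have iY : forall x e, x \in e :&: Y -> psi x < k.
  by move=> x e; rewrite in_setI => /andP [_ /psi_lt].
have lx1 := iX _ _ hx1; have lx2 := iX _ _ hx2.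
have ly1 := iY _ _ hy1; have ly2 := iY _ _ hy2.
case: (perm_ex lx1 lx2 ly1 ly2 (esym he)) => p [vp p1 p2].
have monoe : forall e x0 y0, e \in F -> x0 \in e :&: X -> y0 \in e :&: Y ->
    p (psi y0) = phi x0 -> mono p e.
  move=> e x0 y0 eF hx0 hy0 pe.
  have [c1 c2] := cst e eF.
  have eE : e \in hE G by case/inF: eF.
  have key : forall x, x \in e -> comb p x = phi x0.
    move=> x xe; rewrite /comb; case: ifP => xX.
      by apply: c1 => //; rewrite inE xe.
    rewrite -pe (c2 x y0) //; rewrite inE xe; apply: notX_Y eE xe _; by rewrite xX.
  by move=> x y xe ye; rewrite !key.
have m1 := monoe e1 x1 y1 e1F hx1 hy1 p1.
have m2 := monoe e2 x2 y2 e2F hx2 hy2 p2.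
have [_ _ uni2] := count vp.
by move: ne; rewrite (uni2 e1 e2 e1F e2F m1 m2) eqxx.
Qed.

End Core.

Definition inj_on (g : T -> nat) (B : {set T}) (F : {set {set T}}) :=
  forall e1 e2 y1 y2, e1 \in F -> e2 \in F -> e1 != e2 ->
    y1 \in e1 :&: B -> y2 \in e2 :&: B -> g y1 <> g y2.

Definition xorP F A B (f g : T -> nat) :=
  forall e1 e2 x1 x2 y1 y2, e1 \in F -> e2 \in F -> e1 != e2 ->
    x1 \in e1 :&: A -> x2 \in e2 :&: A -> y1 \in e1 :&: B -> y2 \in e2 :&: B ->
    (f x1 == f x2) != (g y1 == g y2).

Definition meets F A := forall e, e \in F -> exists x, x \in e :&: A.

Lemma neqF (a : bool) : (a != false) = a. Proof. by case: a. Qed.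
Lemma Fneq (a : bool) : (false != a) = a. Proof. by case: a. Qed.

Lemma incP x A F : reflect (exists2 e, e \in F & x \in e :&: A) (x \in incident_part A F).
Proof.
rewrite inE; apply: (iffP andP).
  by case=> xA /existsP [e /andP [eF xe]]; exists e; rewrite // inE xe.
case=> e eF; rewrite inE => /andP [xe xA]; split=> //; apply/existsP; exists e.
by rewrite eF.
Qed.

Lemma xor_sym F A B f g : xorP F A B f g -> xorP F B A g f.
Proof.
move=> h e1 e2 x1 x2 y1 y2 e1F e2F ne h1 h2 h3 h4.
have := h e1 e2 y1 y2 x1 x2 e1F e2F ne h3 h4 h1 h2.
by case: (g x1 == g x2); case: (f y1 == f y2).
Qed.

Lemma D1 F A B f g : xorP F A B f g -> meets F A ->
  const_on f (incident_part A F) -> inj_on g B F.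
Proof.
move=> hx mA hc e1 e2 y1 y2 e1F e2F ne hy1 hy2 eg.
case: (mA e1 e1F) => x1 hx1; case: (mA e2 e2F) => x2 hx2.
have := hx e1 e2 x1 x2 y1 y2 e1F e2F ne hx1 hx2 hy1 hy2.
rewrite eg eqxx (hc x1 x2) ?eqxx //; apply/incP; [by exists e1|by exists e2].
Qed.

Lemma D2 F B g : inj_on g B F -> meets F B -> 1 < #|F| ->
  ~ const_on g (incident_part B F).
Proof.
move=> hi mB /card_gt1P [e1 [e2 [e1F e2F ne]]] hc.
case: (mB e1 e1F) => y1 hy1; case: (mB e2 e2F) => y2 hy2.
apply: (hi e1 e2 y1 y2) => //; apply: hc; apply/incP; [by exists e1|by exists e2].
Qed.

Lemma D3 F A B f g : xorP F A B f g -> meets F A -> meets F B ->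
  (forall e, e \in F -> const_on f (e :&: A) /\ const_on g (e :&: B)) ->
  const_on f (incident_part A F) \/ const_on g (incident_part B F).
Proof.
move=> hx mA mB hc.
case: (classic (const_on f (incident_part A F))) => hf; [by left|right].
have [x1 [x2 [hx1 hx2 fne]]] : exists x1 x2, [/\ x1 \in incident_part A F,
    x2 \in incident_part A F & f x1 <> f x2].
  apply: NNPP => hn; apply: hf => x1 x2 h1 h2; apply: NNPP => hne; apply: hn.
  by exists x1, x2.
case/incP: hx1 => e1 e1F hx1; case/incP: hx2 => e2 e2F hx2.
have ne : e1 != e2.
  apply/eqP => ee; apply: fne; rewrite ee in hx1; by case: (hc e2 e2F) => c _; apply: c.
case: (mB e1 e1F) => y1 hy1; case: (mB e2 e2F) => y2 hy2.
have g12 : g y1 = g y2.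
  have := hx e1 e2 x1 x2 y1 y2 e1F e2F ne hx1 hx2 hy1 hy2.
  by rewrite (introF eqP fne) Fneq => /eqP.
have all1 : forall e y, e \in F -> y \in e :&: B -> g y = g y1.
  move=> e y eF hy.
  case: (eqVneq e e1) => [ee|ne1].
    by rewrite ee in hy; case: (hc e1 e1F) => _ c; apply: c.
  case: (eqVneq e e2) => [ee|ne2].
    by rewrite g12; rewrite ee in hy; case: (hc e2 e2F) => _ c; apply: c.
  apply: NNPP => hne.
  case: (mA e eF) => x hxe.
  have h1 := hx e e1 x x1 y y1 eF e1F ne1 hxe hx1 hy hy1.
  have h2 := hx e e2 x x2 y y2 eF e2F ne2 hxe hx2 hy hy2.
  move: h1 h2; rewrite -g12 (introF eqP hne) !neqF => /eqP ex1 /eqP ex2.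
  by apply: fne; rewrite -ex1 -ex2.
move=> y y' /incP [e eF hy] /incP [e' e'F hy'].
by rewrite (all1 e y eF hy) (all1 e' y' e'F hy').
Qed.


Lemma img_const f A x : x \in A -> (forall y, y \in A -> f y = f x) -> img f A = [:: f x].
Proof.
move=> xA hA; rewrite /img.
set s := undup _.
have us : uniq s by apply: undup_uniq.
have ss : {subset s <= [:: f x]}.
  move=> i; rewrite mem_undup => /mapP [z]; rewrite mem_enum => zA ->.
  by rewrite (hA z zA) mem_seq1.
have xs : f x \in s by rewrite mem_undup; apply: map_f; rewrite mem_enum.
have := uniq_leq_size us ss.
case: s us ss xs => [|a [|b t]] //= _ _; by rewrite mem_seq1 => /eqP ->.
Qed.

Lemma mem_img f A i : reflect (exists2 x, x \in A & f x = i) (i \in img f A).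
Proof.
rewrite /img mem_undup; apply: (iffP mapP).
  by case=> x; rewrite mem_enum => xA ->; exists x.
by case=> x xA <-; exists x; rewrite ?mem_enum.
Qed.

Lemma bmeet G X e : e \in boundary G X ->
  [/\ e \in hE G, exists x, x \in e :&: X & exists y, y \in e :&: (hV G :\: X)].
Proof.
rewrite inE => /andP [eE /andP [/set0Pn [x] hx /set0Pn [y] hy]].
by split=> //; [exists x| exists y].
Qed.

Lemma compl_proper (V X : {set T}) : X != set0 -> X \subset V -> (V :\: X) \proper V.
Proof.
move=> /set0Pn [x xX] sXV; rewrite properEneq subsetDl andbT.
apply/eqP => /setP /(_ x); by rewrite !inE xX (subsetP sXV _ xX).
Qed.

Section Asm.
Variables (G : hgraph T) (k : nat) (X : {set T}) (F : {set {set T}}).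
Let V := hV G.
Let Y := V :\: X.
Let XF := incident_part X F.
Let YF := incident_part Y F.
Hypothesis hyp : is_hypergraph G.
Hypothesis k2 : 1 < k.
Hypothesis crit : critical G k.+1.
Hypothesis Xn0 : X != set0.
Hypothesis Xp : X \proper V.
Hypothesis hFb : F = boundary G X.
Hypothesis cF : #|F| = k.
Hypothesis P1 : forall phi, is_coloring (induced G X) k phi -> const_on phi XF.
Hypothesis Pm : forall psi, is_coloring (induced G Y) k psi ->
  forall e, e \in F -> const_on psi (e :&: Y).
Hypothesis P2 : forall psi, is_coloring (induced G Y) k psi -> inj_on psi Y F.

Lemma mX : meets F X. Proof. by move=> e; rewrite hFb => /bmeet []. Qed.
Lemma mY : meets F Y. Proof. by move=> e; rewrite hFb => /bmeet []. Qed.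
Lemma FE e : e \in F -> e \in hE G. Proof. by rewrite hFb => /bmeet []. Qed.

Lemma psi_ex : exists psi, is_coloring (induced G Y) k psi.
Proof.
have sXV : X \subset V by move: Xp; rewrite properEneq => /andP [].
have := critical_sub_col crit (induced_proper hyp (compl_proper Xn0 sXV)).
by case=> f hf; exists f.
Qed.

Lemma phi_ex : exists phi, is_coloring (induced G X) k phi.
Proof.
have := critical_sub_col crit (induced_proper hyp Xp).
by case=> f hf; exists f.
Qed.

Lemma surj psi : is_coloring (induced G Y) k psi -> forall i, i < k ->
  exists2 e, e \in F & forall y, y \in e :&: Y -> psi y = i.
Proof.
move=> cp i ik.
pose b e := oapp psi 0 [pick y in e :&: Y].
have hb : forall e, e \in F -> forall y, y \in e :&: Y -> psi y = b e.
  move=> e eF y hy; rewrite /b; case: pickP => [z hz|/(_ y)] /=.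
    exact: (Pm cp eF).
  by rewrite hy.
have bl : forall e, e \in F -> b e < k.
  move=> e eF; case: (mY eF) => y hy; rewrite -(hb e eF y hy).
  case: cp => h _; apply: h; move: hy; by rewrite in_setI => /andP [].
set L := map b (enum F).
have uL : uniq L.
  rewrite map_inj_in_uniq ?enum_uniq // => e1 e2; rewrite !mem_enum => e1F e2F be.
  apply: NNPP => ne; case: (mY e1F) => y1 h1; case: (mY e2F) => y2 h2.
  apply: (P2 cp e1F e2F _ h1 h2); first by apply/eqP.
  by rewrite (hb e1 e1F y1 h1) (hb e2 e2F y2 h2).
have sL : {subset L <= iota 0 k}.
  by move=> j /mapP [e]; rewrite mem_enum => eF ->; rewrite mem_iota add0n bl.
have szL : size (iota 0 k) <= size L by rewrite size_iota size_map -cardE cF.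
have [_ eqL] := uniq_min_size uL sL szL.
have : i \in L by rewrite eqL mem_iota add0n ik.
case/mapP => e; rewrite mem_enum => eF ->; exists e => //; exact: hb.
Qed.


Lemma partA1 phi : is_coloring (induced G X) k phi -> size (img phi XF) = 1.
Proof.
move=> cp.
have : F != set0 by rewrite -card_gt0 cF ltnW.
case/set0Pn => e eF; case: (mX eF) => x hx.
have xXF : x \in XF by apply/incP; exists e.
by rewrite (img_const (x := x)) // => y yX; apply: (P1 cp).
Qed.

Lemma partA2 psi : is_coloring (induced G Y) k psi ->
  size (img psi YF) = k /\
  forall i, i < k -> exists e, e \in F /\ img psi (e :&: Y) = [:: i].
Proof.
move=> cp; split.
  have u : uniq (img psi YF) by apply: undup_uniq.
  apply/eqP; rewrite eqn_leq; apply/andP; split.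
    rewrite -[k in _ <= k](size_iota 0 k); apply: uniq_leq_size => // j /mem_img [y yYF <-].
    rewrite mem_iota add0n; case: cp => h _; apply: h.
    by move: yYF; rewrite inE => /andP [].
  rewrite -[k in k <= _](size_iota 0 k); apply: uniq_leq_size; first exact: iota_uniq.
  move=> j; rewrite mem_iota add0n => jk; case: (surj cp jk) => e eF he.
  case: (mY eF) => y hy; apply/mem_img; exists y; last exact: he.
  by apply/incP; exists e.
move=> i ik; case: (surj cp ik) => e eF he; exists e; split=> //.
case: (mY eF) => y hy; rewrite (img_const (x := y)) ?(he y hy) // => z hz.
Qed.

Lemma partB y : y \in YF -> #|[set e in F | y \in e]| = 1.
Proof.
move=> hy; case: psi_ex => psi cp.
case/incP: (hy) => e0 e0F hy0.
have -> : [set e in F | y \in e] = [set e0].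
  apply/setP => e; rewrite !inE; apply/andP/eqP.
    case=> eF ye; apply: NNPP => ne; apply: (P2 cp eF e0F _ _ hy0) => //.
      by apply/eqP.
    rewrite inE ye /=; by move: hy0; rewrite inE => /andP [].
  by move=> ->; split=> //; move: hy0; rewrite inE => /andP [].
by rewrite cards1.
Qed.




Lemma partC : 1 < #|XF| -> critical (add_edge (induced G X) XF) k.+1.
Proof.
move=> cXF.
have sXV : X \subset V by move: Xp; rewrite properEneq => /andP [].
have XFX : XF \subset X by apply/subsetP => x; rewrite inE => /andP [].
apply: critical_of.
- case=> f cf.
  have cf' : is_coloring (induced G X) k f.
    apply: (@col_sub_gen _ _ (induced G X) k f cf) => //=; apply: subsetUr.
  have hc := P1 cf'.
  case: cf => _ /(_ XF); rewrite /= setU11 => /(_ isT) [x [y [hx hy]]].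
  by apply; apply: hc.
- case: phi_ex => phi cp.
  case/card_gt1P: cXF => x0 [x1 [h0 h1 n01]].
  exists (fun x => if x == x0 then k else phi x); split.
    move=> x /= xX; case: ifP => // _; apply: leqW; by case: cp => h _; apply: h.
  move=> e /=; rewrite in_setU1 => /orP [/eqP ->|eE].
    exists x0, x1; split=> //; rewrite eqxx eq_sym (negbTE n01).
    move=> ek; have : phi x1 < k by case: cp => h _; apply: h; apply: (subsetP XFX).
    by rewrite -ek ltnn.
  have eX : e \subset X by move: eE; rewrite inE => /andP [].
  case: cp => cl /(_ e eE) [x [y [xe ye nxy]]].
  have lx : phi x < k by apply: cl; apply: (subsetP eX).
  have ly : phi y < k by apply: cl; apply: (subsetP eX).
  exists x, y; split=> //.
  case: (eqVneq x x0) => [ex|nx]; case: (eqVneq y x0) => [ey|ny] //.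
  + by move=> _; apply: nxy; rewrite ex ey.
  + by move=> e1; move: ly; rewrite -e1 ltnn.
  + by move=> e1; move: lx; rewrite e1 ltnn.
- case=> VH EH [[hH /= sVH sEH] neH].
  case: (boolP (XF \in EH)) => XFH; last first.
    case: phi_ex => phi cp; exists phi; apply: (@col_sub_gen _ _ (HG VH EH) k phi cp) => //=.
    apply/subsetP => e eEH; move: (subsetP sEH e eEH); rewrite in_setU1.
    case/orP => // /eqP ee; by move: XFH; rewrite -ee eEH.
  have XFVH : XF \subset VH by case: (hH XF XFH).
  pose H' := HG (VH :|: Y) ((EH :\ XF) :|: [set e in hE G | e \subset Y] :|: F).
  have pH' : proper_subhypergraph H' G.
    split; first split.
    + move=> e /=; rewrite !inE => /orP [/orP [/andP [ne eEH]|/andP [eE eY]]|eF].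
      * by case: (hH e eEH) => s1 s2; split=> //; apply: subset_trans s1 (subsetUl _ _).
      * by case: (hyp eE) => _ s2; split=> //; apply: subset_trans eY (subsetUr _ _).
      * case: (hyp (FE eF)) => s1 s2; split=> //; apply/subsetP => x xe.
        rewrite inE; case: (boolP (x \in X)) => xX.
          by rewrite (subsetP XFVH) //; apply/incP; exists e; rewrite // inE xe.
        by apply/orP; right; rewrite /Y inE xX /=; exact: (subsetP s1).
    + by rewrite /= subUset subsetDl andbT; apply: subset_trans sVH sXV.
    + rewrite /= !subUset -andbA; apply/and3P; split.
      * apply/subsetP => e; rewrite !inE => /andP [ne /(subsetP sEH)].
        by rewrite !inE (negbTE ne) /= => /andP [].
      * by apply/subsetP => e; rewrite inE => /andP [].
      * by apply/subsetP => e /FE.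
    + case: (classic (VH = X)) => [eV|nV]; last first.
        have [x xX xn] : exists2 x, x \in X & x \notin VH.
          apply: NNPP => hn; apply: nV; apply/eqP; rewrite eqEsubset sVH /=.
          apply/subsetP => x xX; apply: NNPP => xn; apply: hn; exists x => //.
          by apply/negP.
        move=> eH'; have : x \in hV H' by rewrite eH' (subsetP sXV).
        by rewrite /= inE (negbTE xn) /Y inE xX.
      have [e eE1 en] : exists2 e, e \in XF |: [set e in hE G | e \subset X] & e \notin EH.
        apply: NNPP => hn; apply: neH; rewrite eV; congr HG.
        apply/eqP; rewrite eqEsubset sEH /=; apply/subsetP => e eE1.
        apply: NNPP => en; apply: hn; exists e => //; by apply/negP.
      have ne : e != XF by apply: contraNneq en => ->.
      move: eE1; rewrite in_setU1 (negbTE ne) /= inE => /andP [eE eX].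
      move=> eH'; have : e \in hE H' by rewrite eH'.
      rewrite /= !inE (negbTE en) andbF /= => /orP [/andP [_ eY]|eF].
        case: (hyp eE) => _; case: (set_0Vmem e) => [->|[x xe]]; first by rewrite cards0.
        by have := subsetP eY x xe; rewrite /Y inE (subsetP eX x xe).
      case: (mY eF) => y; rewrite inE => /andP [ye]; by rewrite /Y inE (subsetP eX y ye).
  case: (critical_sub_col crit pH') => g cg.
  exists g; split.
    by move=> x xV; case: cg => h _; apply: h; rewrite /= inE xV.
  move=> e eEH; case: (eqVneq e XF) => [->|ne]; last first.
    by case: cg => _ h; apply: h; rewrite /= !inE ne eEH.
  apply: NNPP => hn.
  have cgY : is_coloring (induced G Y) k g.
    apply: (@col_sub_gen _ _ (induced G Y) k g cg) => /=; first exact: subsetUr.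
    by apply: subset_trans (subsetUl _ _); apply: subsetUr.
  have : XF != set0 by rewrite -card_gt0 ltnW.
  case/set0Pn => x0 hx0.
  have il : g x0 < k by case: cg => h _; apply: h; rewrite /= inE (subsetP XFVH).
  case: (surj cgY il) => e1 eF he.
  case: cg => _ /(_ e1); rewrite /= inE eF orbT => /(_ isT) [x [y [xe ye nxy]]].
  have key : forall z, z \in e1 -> g z = g x0.
    move=> z ze; case: (boolP (z \in X)) => zX.
      apply: NNPP => nz; apply: hn; exists z, x0; split=> //.
      by apply/incP; exists e1; rewrite // inE ze.
    by apply: he; rewrite inE ze /Y inE zX /=; apply: (subsetP (sub_V hyp (FE eF))).
  by apply: nxy; rewrite !key.
Qed.


Lemma nF_X e : e \in F -> ~~ (e \subset X).
Proof.
move=> eF; case: (mY eF) => y; rewrite !inE => /andP [ye /andP [yX _]].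
by apply/negP => /subsetP /(_ y ye); rewrite (negbTE yX).
Qed.

Lemma nF_Y e : e \in F -> ~~ (e \subset Y).
Proof.
move=> eF; case: (mX eF) => x; rewrite !inE => /andP [xe xX].
by apply/negP => /subsetP /(_ x xe); rewrite /Y inE xX.
Qed.

Lemma nXY e : e \in hE G -> e \subset X -> e \subset Y -> False.
Proof.
move=> eE eX eY; case: (hyp eE) => _; case: (set_0Vmem e) => [->|[x xe]].
  by rewrite cards0.
by have := subsetP eY x xe; rewrite /Y inE (subsetP eX x xe).
Qed.

Lemma Fn0 : exists e, e \in F.
Proof. by apply/set0Pn; rewrite -card_gt0 cF ltnW. Qed.

Lemma partD : critical (glue_new_vertex G X F) k.+1.
Proof.
set g := fun e : {set T} => [set Some y | y : T in e :\: X] :|: [set None].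
have SY : forall y, y \in Y -> Some y \in hV (glue_new_vertex G X F).
  by move=> y yY; rewrite /= in_setU1; apply/orP; right; apply: imset_f.
have gE : forall e, e \in F -> g e \in hE (glue_new_vertex G X F).
  by move=> e eF; rewrite /= in_setU; apply/orP; left; apply: imset_f.
have YE : forall e, e \in hE (induced G Y) ->
    [set Some y | y : T in e] \in hE (glue_new_vertex G X F).
  by move=> e eE; rewrite /= in_setU; apply/orP; right; apply: imset_f.
have eV : forall e, e \in F -> forall y, y \in e -> y \notin X -> y \in Y.
  by move=> e eF y ye yX; rewrite /Y inE yX (subsetP (sub_V hyp (FE eF))).
apply: critical_of.
- case=> c [cl cp].
  pose psi := fun y => c (Some y).
  have cps : is_coloring (induced G Y) k psi.
    split=> [y yY|e eE]; first by apply: cl; apply: SY.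
    case: (cp _ (YE e eE)) => u [v [/imsetP [x xe ->] /imsetP [y ye ->] nxy]].
    by exists x, y.
  have il : c None < k by apply: cl; rewrite /= setU11.
  case: (surj cps il) => e eF he.
  case: (cp _ (gE e eF)) => u [v [hu hv nuv]].
  have key : forall w, w \in g e -> c w = c None.
    move=> w; rewrite in_setU in_set1 => /orP [/imsetP [y]|/eqP -> //].
    rewrite inE => /andP [yX ye] ->; apply: he; rewrite inE ye /=.
    exact: (eV e eF).
  by apply: nuv; rewrite !key.
- case: psi_ex => psi cp; exists (fun u => if u is Some y then psi y else k); split.
    move=> [y|] /=; last by [].
    rewrite in_setU1 /= => /imsetP [z zY [->]].
    by apply: leqW; case: cp => h _; apply: h.
  move=> u; rewrite /= in_setU => /orP [/imsetP [e eF ->]|/imsetP [e eE ->]].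
    case: (mY eF) => y; rewrite inE => /andP [ye yY].
    exists (Some y), None; split.
    + rewrite in_setU; apply/orP; left; apply: imset_f.
      by rewrite inE ye andbT; move: yY; rewrite /Y inE => /andP [].
    + by rewrite in_setU set11 orbT.
    + move=> /= hk; have : psi y < k by case: cp => h _; apply: h.
      by rewrite hk ltnn.
  case: cp => _ /(_ e eE) [x [y [xe ye nxy]]].
  by exists (Some x), (Some y); split=> //; apply: imset_f.
- case=> VH EH [[hH /= sVH sEH] neH].
  pose H' := HG (X :|: [set y | Some y \in VH])
    ([set e in hE G | e \subset X] :|: [set e in F | g e \in EH] :|:
     [set e in hE G | (e \subset Y) && ([set Some y | y : T in e] \in EH)]).
  have notH' : forall e, e \in F -> g e \notin EH -> e \notin hE H'.
    move=> e eF gn; rewrite /= !inE (negbTE (nF_X eF)) (negbTE (nF_Y eF)) (negbTE gn).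
    by rewrite !andbF.
  have pH' : proper_subhypergraph H' G.
    split; first split.
    + move=> e /=; rewrite !inE => /orP [/orP [/andP [eE eX]|/andP [eF ge]]|
                                       /andP [eE /andP [eY ye]]].
      * case: (hyp eE) => _ s2; split=> //; exact: subset_trans eX (subsetUl _ _).
      * case: (hyp (FE eF)) => s1 s2; split=> //; apply/subsetP => x xe.
        rewrite in_setU; case: (boolP (x \in X)) => //= xX.
        rewrite inE; case: (hH _ ge) => sg _; apply: (subsetP sg).
        rewrite in_setU; apply/orP; left; apply: imset_f; by rewrite inE xX.
      * case: (hyp eE) => _ s2; split=> //; apply/subsetP => x xe.
        rewrite in_setU inE; apply/orP; right.
        case: (hH _ ye) => sg _; apply: (subsetP sg); exact: imset_f.
    + rewrite /= subUset; apply/andP; split.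
        by move: Xp; rewrite properEneq => /andP [].
      apply/subsetP => y; rewrite inE => /(subsetP sVH).
      rewrite /= in_setU1 /= => /imsetP [z zY [->]].
      by move: zY; rewrite /Y inE => /andP [].
    + rewrite /= !subUset -andbA; apply/and3P; split.
      * by apply/subsetP => e; rewrite inE => /andP [].
      * by apply/subsetP => e; rewrite inE => /andP [/FE].
      * by apply/subsetP => e; rewrite inE => /andP [].
    + move=> eH'.
      have noE : forall e, e \in hE G -> e \notin hE H' -> False.
        by move=> e eE; rewrite eH' eE.
      case: (classic (VH = hV (glue_new_vertex G X F))) => [eVH|nV]; last first.
        have [u uV un] : exists2 u, u \in hV (glue_new_vertex G X F) & u \notin VH.
          apply: NNPP => hn; apply: nV; apply/eqP; rewrite eqEsubset sVH /=.
          apply/subsetP => u uV; apply: NNPP => un; apply: hn; exists u => //.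
          by apply/negP.
        case: u uV un => [y|] uV un.
          move: uV; rewrite /= in_setU1 /= => /imsetP [z zY [ez]].
          have : y \in hV H' by rewrite eH'; move: zY; rewrite /Y inE ez => /andP [].
          rewrite /= in_setU inE (negbTE un) orbF.
          by move: zY; rewrite /Y inE ez => /andP [/negbTE ->].
        case: Fn0 => e eF; apply: (noE e (FE eF)); apply: notH' => //.
        apply/negP => /hH [sg _]; move: un; rewrite (subsetP sg) //.
        by rewrite in_setU set11 orbT.
      have [u uE un] : exists2 u, u \in hE (glue_new_vertex G X F) & u \notin EH.
        apply: NNPP => hn; apply: neH; rewrite eVH; congr HG.
        apply/eqP; rewrite eqEsubset sEH /=; apply/subsetP => u uE.
        apply: NNPP => un; apply: hn; exists u => //; by apply/negP.
      move: uE un; rewrite /= in_setU => /orP [/imsetP [e eF ->]|/imsetP [e eEY ->]] un.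
        by apply: (noE e (FE eF)); apply: notH'.
      move: eEY; rewrite inE => /andP [eE eY].
      apply: (noE e eE); rewrite /= !inE eE eY (negbTE un) /= orbF.
      apply/negP => /orP [eX|/andP [eF _]]; first exact: (nXY eE eX eY).
      by move: eY; apply/negP; apply: nF_Y.
  case: (critical_sub_col crit pH') => c cH'.
  have cX : is_coloring (induced G X) k c.
    apply: (@col_sub_gen _ _ (induced G X) k c cH') => /=; first exact: subsetUl.
    by apply: subset_trans (subsetUl _ _); apply: subsetUl.
  have hc := P1 cX.
  case: Fn0 => e0 e0F; case: (mX e0F) => x0 hx0.
  have x0XF : x0 \in XF by apply/incP; exists e0.
  have x0X : x0 \in X by move: hx0; rewrite inE => /andP [].
  exists (fun u => if u is Some y then c y else c x0); split.
    case: cH' => cl _; move=> [y|] uV /=; apply: cl; rewrite /= in_setU.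
      by rewrite inE uV orbT.
    by rewrite x0X.
  move=> u uEH; move: (subsetP sEH u uEH).
  rewrite /= in_setU => /orP [/imsetP [e eF eu]|/imsetP [e eEY eu]].
    have eH : e \in hE H' by rewrite /= !inE eF /g -eu uEH orbT.
    case: cH' => _ /(_ e eH) [x [y [xe ye nxy]]].
    pose m := fun z => if z \in X then None else Some z.
    have mg : forall z, z \in e -> m z \in u.
      move=> z ze; rewrite eu /m; case: ifP => zX; rewrite in_setU ?set11 ?orbT //.
      by apply/orP; left; apply: imset_f; rewrite inE zX.
    have md : forall z, z \in e ->
        (fun u => if u is Some y then c y else c x0) (m z) = c z.
      move=> z ze; rewrite /m; case: ifP => //= zX; apply: hc => //.
      by apply/incP; exists e; rewrite // inE ze zX.
    exists (m x), (m y); split; [exact: mg|exact: mg|by rewrite !md].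
  move: eEY; rewrite inE => /andP [eE eY].
  have eH : e \in hE H' by rewrite /= !inE eE eY -eu uEH /= orbT.
  case: cH' => _ /(_ e eH) [x [y [xe ye nxy]]].
  by exists (Some x), (Some y); split=> //; rewrite eu; apply: imset_f.
Qed.

Lemma assemble :
  ([/\ X != set0, X \proper hV G & F = boundary G X] /\
    [/\ (forall phi, is_coloring (induced G X) k phi -> size (img phi XF) = 1) /\
        (forall phi, is_coloring (induced G Y) k phi ->
           size (img phi YF) = k /\
           forall i, i < k -> exists e, e \in F /\ img phi (e :&: Y) = [:: i]),
        (forall y, y \in YF -> #|[set e in F | y \in e]| = 1),
        (2 <= #|XF| -> critical (add_edge (induced G X) XF) k.+1) &
        critical (glue_new_vertex G X F) k.+1]).
Proof.
split; first by split.
split; [split|exact: partB|exact: partC|exact: partD].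
  exact: partA1.
exact: partA2.
Qed.

End Asm.

Lemma adj_sym G : symmetric (adj G).
Proof.
move=> x y; rewrite /adj; apply: eq_existsb => e; by rewrite (andbC (x \in e)).
Qed.

Lemma sepX G F : (exists x, x \in hV G) -> separating G F ->
  exists X0, [/\ X0 != set0, X0 \proper hV G & boundary G X0 \subset F].
Proof.
case=> x0 x0V [sF hlt].
have c1 : 0 < #|components G|.
  by rewrite card_gt0; apply/set0Pn; exists [set y in hV G | connect (adj G) x0 y]; apply: imset_f.
have : 1 < #|components (del_edges G F)| by apply: leq_trans hlt.
case/card_gt1P => C1 [C2 [/imsetP [x1 x1V ->] /imsetP [x2 x2V ->] ne]].
set G' := del_edges G F.
have cs := sym_connect_sym (adj_sym G').
exists [set y in hV G' | connect (adj G') x1 y]; split.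
- by apply/set0Pn; exists x1; rewrite inE x1V connect0.
- rewrite properEneq; apply/andP; split; last by apply/subsetP => y; rewrite inE => /andP [].
  apply/eqP => eV; move/negP: ne; apply; apply/eqP.
  have : x2 \in hV G' by [].
  rewrite -[in X in X -> _]eV inE => /andP [_ c12].
  apply/setP => y; rewrite !inE; congr andb; apply/idP/idP => h.
    by apply: (connect_trans _ h); rewrite cs.
  exact: connect_trans c12 h.
- apply/subsetP => e; rewrite inE => /andP [eE /andP [/set0Pn [x hx] /set0Pn [y hy]]].
  apply: NNPP => eF; move: hx hy; rewrite !inE => /andP [xe /andP [_ cx]] /andP [ye /andP [ny yV]].
  move: ny; rewrite yV /= => /negP; apply.
  apply: connect_trans cx (connect1 _); apply/existsP; exists e.
  by rewrite xe ye !andbT /G' /= inE eE andbT; apply/negP.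
Qed.

End Gen.

Lemma setDD (T : finType) (V X : {set T}) : X \subset V -> V :\: (V :\: X) = X.
Proof.
move=> sXV; apply/setP => x; rewrite !inE negb_and negbK.
case: (boolP (x \in X)) => xX /=; [by rewrite (subsetP sXV x xX) | by case: (x \in V)].
Qed.

Lemma bound_compl (T : finType) (G : hgraph T) (X : {set T}) :
  X \subset hV G -> boundary G (hV G :\: X) = boundary G X.
Proof.
move=> sXV; apply/setP => e; rewrite !inE setDD //.
by case: (e \in hE G); rewrite //= andbC.
Qed.

Unset Implicit Arguments.

Theorem theorem12 (T : finType) (G : hgraph T) (k : nat) (F : {set {set T}}) :
  is_hypergraph G -> 2 <= k -> critical G k.+1 ->
  separating G F -> #|F| <= k ->
  #|F| = k /\
  exists X : {set T},
    let Y := hV G :\: X in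
    let XF := incident_part X F in
    let YF := incident_part Y F in
    (* (X, Y, F) is an edge cut of G *)
    [/\ X != set0, X \proper hV G & F = boundary G X] /\
    [/\ (* (a) *)
        (forall phi, is_coloring (induced G X) k phi -> size (img phi XF) = 1) /\
        (forall phi, is_coloring (induced G Y) k phi ->
           size (img phi YF) = k /\
           forall i, i < k -> exists e, e \in F /\ img phi (e :&: Y) = [:: i]),
        (* (b) *)
        (forall y, y \in YF -> #|[set e in F | y \in e]| = 1),
        (* (c) *)
        (2 <= #|XF| -> critical (add_edge (induced G X) XF) k.+1) &
        (* (d) *)
        critical (glue_new_vertex G X F) k.+1].
Proof.
move=> hyp k2 crit sep hFk.
have nG := critical_not_col crit.
have k0 : 0 < k by apply: ltnW.
have Vn : exists x, x \in hV G.
  apply: NNPP => hn; apply: nG; exists (fun _ => 0); split.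
    by move=> x xV; case: hn; exists x.
  move=> e eE; case: (hyp e eE) => se; case: (set_0Vmem e) => [->|[x xe]].
    by rewrite cards0.
  by case: hn; exists x; apply: (subsetP se).
case: (sepX Vn sep) => X0 [X0n X0p sub].
have sXV : X0 \subset hV G by move: X0p; rewrite properEneq => /andP [].
set Y0 := hV G :\: X0.
have hb : #|boundary G X0| <= k by apply: leq_trans (subset_leq_card sub) hFk.
have [phi0 cp0] := critical_sub_col crit (induced_proper hyp X0p).
have [psi0 cq0] := critical_sub_col crit (induced_proper hyp (compl_proper X0n sXV)).
have [cF0 _ _] := core hyp nG k0 hb cp0 cq0.
have FF : F = boundary G X0.
  by apply/eqP; rewrite eq_sym eqEcard sub cF0 hFk.
have cFk : #|F| = k by rewrite FF.
have gen : forall phi psi, is_coloring (induced G X0) k phi ->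
    is_coloring (induced G Y0) k psi ->
    (forall e, e \in F -> const_on phi (e :&: X0) /\ const_on psi (e :&: Y0)) /\
    xorP F X0 Y0 phi psi.
  move=> phi psi a b; case: (core hyp nG k0 hb a b) => _ h1 h2; rewrite FF; by split.
have mX0 : meets F X0 by move=> e; rewrite FF => /bmeet [].
have mY0 : meets F Y0 by move=> e; rewrite FF => /bmeet [].
have two : 1 < #|F| by rewrite cFk.
split=> //.
case: (classic (const_on phi0 (incident_part X0 F))) => h0.
  exists X0; apply: assemble => //.
  - move=> phi cp; case: (gen phi psi0 cp cq0) => m x.
    case: (D3 x mX0 mY0 m) => // hc; exfalso.
    have inj := D1 (proj2 (gen phi0 psi0 cp0 cq0)) mX0 h0.
    exact: (D2 inj mY0 two hc).
  - move=> psi cq e eF; case: (gen phi0 psi cp0 cq) => m _; by case: (m e eF).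
  - move=> psi cq; case: (gen phi0 psi cp0 cq) => _ x; exact: D1 x mX0 h0.
have hY : forall psi, is_coloring (induced G Y0) k psi -> const_on psi (incident_part Y0 F).
  move=> psi cq; case: (gen phi0 psi cp0 cq) => m x; by case: (D3 x mX0 mY0 m).
have sYV : Y0 \subset hV G by apply: subsetDl.
exists Y0; apply: assemble => //.
- have : Y0 \proper hV G := compl_proper X0n sXV.
  case: (properP X0p) => _ [x xV xn] _.
  by apply/set0Pn; exists x; rewrite /Y0 inE xn.
- exact: compl_proper.
- by rewrite bound_compl.
- rewrite setDD // => phi cp e eF; case: (gen phi psi0 cp cq0) => m _; by case: (m e eF).
- rewrite setDD // => phi cp.
  exact: D1 (xor_sym (proj2 (gen phi psi0 cp cq0))) mY0 (hY psi0 cq0).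
Qed.
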